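(* Let $M$ be the $3\times 2$ array of cells (3 columns, 2 rows) whose standard figure $F\subseteq[0,3]\times[0,2]\subseteq\mathbb{R}^2$ is the union of the segment from $(0,0)$ to $(1,1)$ (increasing, bottom cell of column 1), the segment from $(1,1)$ to $(2,2)$ (increasing, top cell of column 2), the segment from $(1,1)$ to $(2,0)$ (decreasing, bottom cell of column 2), and the segment from $(2,2)$ to $(3,1)$ (decreasing, top cell of column 3). Then a permutation is a simple permutation avoiding both $4231$ and $3124$ if and only if it is a simple permutation lying in $\operatorname{Geom}(M)$.
   Context: A permutation $\pi$ avoids $\sigma$ if no subsequence of $\pi$ is order-isomorphic to $\sigma$. An interval of a permutation $\pi$ is a set of contiguous positions $\{a,a+1,\dots,b\}$ whose values $\{\pi(i)\}$ also form a set of contiguous integers; intervals of size $0$, $1$ and $n$ are trivial, and $\pi$ is simple if all its intervals are trivial. For a figure $F\subseteq\mathbb{R}^2$, $\operatorname{Geom}(M)$ is the set of all permutations obtained as follows: choose finitely many points of $F$, no two on a common horizontal or vertical line, label them $1,\dots,n$ from bottom to top, and read the labels from left to right. (In matrix form, with the top row displayed first, $M=\begin{pmatrix}0&1&-1\\1&-1&0\end{pmatrix}$, where $1$ denotes an increasing diagonal segment across the cell, $-1$ a decreasing one, $0$ an empty cell.) *)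

(* Defs.v *)
From Stdlib Require Import Reals.
From mathcomp Require Import all_boot all_fingroup.
Set Implicit Arguments. Unset Strict Implicit. Unset Printing Implicit Defensive.

(* Positions and values of p : 'S_n are 0-indexed ordinals. *)

Definition contains_pat (n : nat) (p : 'S_n) (q : seq nat) : Prop :=
  exists f : 'I_(size q) -> 'I_n,
    (forall i j : 'I_(size q), i < j -> f i < f j) /\
    (forall i j : 'I_(size q), (nth 0 q i < nth 0 q j) = (p (f i) < p (f j))).

Definition avoids (n : nat) (p : 'S_n) (q : seq nat) : Prop := ~ contains_pat p q.

Definition is_interval (n : nat) (p : 'S_n) (a b : nat) : Prop :=
  a <= b < n /\
  exists c : nat, forall v : nat,
    (exists i : 'I_n, [/\ a <= i, i <= b & nat_of_ord (p i) = v]) <->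
    (c <= v < c + (b - a + 1)).

Definition simple_perm (n : nat) (p : 'S_n) : Prop :=
  forall a b : nat, is_interval p a b -> b - a + 1 = 1 \/ b - a + 1 = n.

Definition figF (x y : R) : Prop :=
  (Rle 0 x /\ Rle x 1 /\ y = x) \/
  (Rle 1 x /\ Rle x 2 /\ y = x) \/
  (Rle 1 x /\ Rle x 2 /\ y = Rminus 2 x) \/
  (Rle 2 x /\ Rle x 3 /\ y = Rminus 4 x).

(* p is in Geom(F): there are n points of F, indexed by left-to-right order
   (x strictly increasing), no two on a common horizontal line, such that
   labelling them by height gives p: the i-th point from the left has
   height-rank p i. *)
Definition in_Geom (F : R -> R -> Prop) (n : nat) (p : 'S_n) : Prop :=
  exists (x y : 'I_n -> R),
    (forall i, F (x i) (y i)) /\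
    (forall i j : 'I_n, i < j -> Rlt (x i) (x j)) /\
    (forall i j : 'I_n, Rlt (y i) (y j) <-> p i < p j).

(* Main.v *)
Require Import Defs.
From Stdlib Require Import Reals Lra Classical.
From mathcomp Require Import all_boot all_fingroup.
From mathcomp Require Import zify.
Set Implicit Arguments. Unset Strict Implicit. Unset Printing Implicit Defensive.


Definition pv (n : nat) (p : 'S_n) (i : nat) : nat :=
  oapp (fun o : 'I_n => val (p o)) 0 (insub i).

Lemma pvE n (p : 'S_n) (o : 'I_n) : pv p o = p o.
Proof. by rewrite /pv valK. Qed.

Lemma pvO n (p : 'S_n) i (Hi : i < n) : pv p i = p (Ordinal Hi).
Proof. by rewrite -pvE. Qed.

Lemma pv_lt n (p : 'S_n) i : i < n -> pv p i < n.
Proof. by move=> Hi; rewrite (pvO p Hi). Qed.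

Lemma pv_inj n (p : 'S_n) i j : i < n -> j < n -> pv p i = pv p j -> i = j.
Proof.
move=> Hi Hj; rewrite (pvO p Hi) (pvO p Hj) => /val_inj /perm_inj.
by move=> /(congr1 val).
Qed.

Lemma pv_onto n (p : 'S_n) v : v < n -> exists i, i < n /\ pv p i = v.
Proof.
move=> Hv; exists (val ((p^-1)%g (Ordinal Hv))); split; first exact: ltn_ord.
by rewrite pvE permKV.
Qed.

Lemma min_ex (P : nat -> Prop) : (exists k, P k) ->
  exists k, P k /\ forall j, j < k -> ~ P j.
Proof.
case=> k; elim: k {-2}k (leqnn k) => [|N IH] k Hk Pk.
  by exists k; split=> // j Hj; exfalso; lia.
case: (classic (exists j, j < k /\ P j)) => [[j [Hj Pj]]|H].
  by apply: (IH j) => //; lia.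
by exists k; split=> // j Hj Pj; apply: H; exists j.
Qed.

Lemma max_ex (P : nat -> Prop) N : (exists k, P k) -> (forall k, P k -> k <= N) ->
  exists k, P k /\ forall j, P j -> j <= k.
Proof.
move=> [k Pk] HN.
have [d [[Pd Hd] Hmin]] := @min_ex (fun d => P (N - d) /\ d <= N) (ex_intro _ (N - k) (conj (eq_ind _ P Pk _ (esym (subKn (HN _ Pk)))) (leq_subr _ _))).
exists (N - d); split=> // j Pj.
have := HN _ Pj => HjN.
case: (leqP j (N - d)) => // Hlt; exfalso.
apply: (Hmin (N - j)); first lia.
by rewrite subKn //; split=> //; exact: leq_subr.
Qed.

Lemma range_min (f : nat -> nat) a b : a <= b ->
  exists i, a <= i <= b /\ forall j, a <= j <= b -> f i <= f j.
Proof.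
move=> Hab; elim: b Hab => [|b IH] Hab.
  by exists a; split=> [|j Hj]; [lia | have -> : j = a by lia].
case: (leqP a b) => Hab'.
  have [i [Hi Hmin]] := IH Hab'.
  case: (leqP (f i) (f b.+1)) => Hc.
    exists i; split; first lia.
    by move=> j Hj; case: (leqP j b) => Hjb; [apply: Hmin; lia | have -> : j = b.+1 by lia].
  exists b.+1; split; first lia.
  move=> j Hj; case: (leqP j b) => Hjb; last by have -> : j = b.+1 by lia.
  by have := Hmin j; lia.
exists b.+1; split=> [|j Hj]; first lia.
by have -> : j = b.+1 by lia.
Qed.

Lemma range_max (f : nat -> nat) a b : a <= b ->
  exists i, a <= i <= b /\ forall j, a <= j <= b -> f j <= f i.
Proof.
move=> Hab; elim: b Hab => [|b IH] Hab.
  by exists a; split=> [|j Hj]; [lia | have -> : j = a by lia].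
case: (leqP a b) => Hab'.
  have [i [Hi Hmax]] := IH Hab'.
  case: (leqP (f b.+1) (f i)) => Hc.
    exists i; split; first lia.
    by move=> j Hj; case: (leqP j b) => Hjb; [apply: Hmax; lia | have -> : j = b.+1 by lia].
  exists b.+1; split; first lia.
  move=> j Hj; case: (leqP j b) => Hjb; last by have -> : j = b.+1 by lia.
  by have := Hmax j; lia.
exists b.+1; split=> [|j Hj]; first lia.
by have -> : j = b.+1 by lia.
Qed.

Lemma contains4 n (p : 'S_n) (q : seq nat) (Hq : size q = 4) a b c d :
  a < b -> b < c -> c < d -> d < n ->
  (forall i j : 'I_4, (nth 0 q i < nth 0 q j) =
     (pv p (nth 0 [:: a; b; c; d] i) < pv p (nth 0 [:: a; b; c; d] j))) ->
  contains_pat p q.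
Proof.
move=> Hab Hbc Hcd Hdn Hv.
have Hs : forall i : 'I_4, nth 0 [:: a; b; c; d] i < n.
  by case=> [[|[|[|[|i]]]] Hi] //=; lia.
rewrite /contains_pat Hq.
exists (fun i : 'I_4 => Ordinal (Hs i)); split.
  by move=> [[|[|[|[|i]]]] Hi] [[|[|[|[|j]]]] Hj] //= _; lia.
by move=> i j; rewrite Hv -!pvE.
Qed.

Lemma av4231 n (p : 'S_n) a b c d : avoids p [:: 4; 2; 3; 1] ->
  a < b -> b < c -> c < d -> d < n ->
  pv p d < pv p b -> pv p b < pv p c -> pv p c < pv p a -> False.
Proof.
move=> Hav Hab Hbc Hcd Hdn H1 H2 H3; apply: Hav.
apply: (@contains4 n p [:: 4; 2; 3; 1] erefl a b c d) => //.
by move=> [[|[|[|[|i]]]] Hi] [[|[|[|[|j]]]] Hj] //=; lia.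
Qed.

Lemma av3124 n (p : 'S_n) a b c d : avoids p [:: 3; 1; 2; 4] ->
  a < b -> b < c -> c < d -> d < n ->
  pv p b < pv p c -> pv p c < pv p a -> pv p a < pv p d -> False.
Proof.
move=> Hav Hab Hbc Hcd Hdn H1 H2 H3; apply: Hav.
apply: (@contains4 n p [:: 3; 1; 2; 4] erefl a b c d) => //.
by move=> [[|[|[|[|i]]]] Hi] [[|[|[|[|j]]]] Hj] //=; lia.
Qed.

Lemma convex_interval n (p : 'S_n) a b : a <= b -> b < n ->
  (forall k i1 i2, k < n -> a <= i1 <= b -> a <= i2 <= b -> ~~ (a <= k <= b) ->
     pv p i1 < pv p k -> pv p k < pv p i2 -> False) ->
  is_interval p a b.
Proof.
move=> Hab Hbn Hconv.
have [i1 [Hi1 Hmin]] := range_min (pv p) Hab.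
have [i2 [Hi2 Hmax]] := range_max (pv p) Hab.
have Hval : forall v, (exists k, a <= k <= b /\ pv p k = v) <-> pv p i1 <= v <= pv p i2.
  move=> v; split.
    by move=> [k [Hk <-]]; rewrite Hmin // Hmax.
  move=> /andP [H1 H2].
  have Hvn : v < n by have := pv_lt p (i:=i2); lia.
  have [k [Hkn Hk]] := pv_onto p Hvn.
  case Hkr: (a <= k <= b); first by exists k.
  exfalso.
  case: (ltngtP (pv p i1) v) H1 => // [Hlt1 _|Heq _]; last first.
    have := @pv_inj _ p i1 k; rewrite Heq Hk => /(_ ltac:(lia) Hkn erefl) Hik.
    by move: Hkr; rewrite -Hik Hi1.
  case: (ltngtP v (pv p i2)) H2 => // [Hlt2 _|Heq _]; last first.
    have := @pv_inj _ p i2 k; rewrite -Heq Hk => /(_ ltac:(lia) Hkn erefl) Hik.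
    by move: Hkr; rewrite -Hik Hi2.
  by apply: (Hconv k i1 i2) => //; rewrite ?Hkr ?Hk.
have Hmm := Hmin i2 Hi2.
set s := map (pv p) (iota a (b - a + 1)).
have Hus : uniq s.
  rewrite map_inj_in_uniq ?iota_uniq // => i j; rewrite !mem_iota => Hi Hj.
  by apply: pv_inj; lia.
have Hs : s =i iota (pv p i1) (pv p i2 - pv p i1 + 1).
  move=> v; rewrite mem_iota.
  have := Hval v; case=> H1 H2.
  apply/mapP/idP.
    move=> [k]; rewrite mem_iota => Hk Hvk.
    have Hk' : a <= k <= b by lia.
    have := H1 (ex_intro _ k (conj Hk' (esym Hvk))); lia.
  move=> Hv; have [|k [Hk <-]] := H2; first lia.
  by exists k; rewrite // mem_iota; lia.
have Hsz := perm_size (uniq_perm Hus (iota_uniq _ _) Hs).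
rewrite size_map !size_iota in Hsz.
split; first by apply/andP.
exists (pv p i1) => v; split.
  move=> [o [Ho1 Ho2 Hov]].
  have Ho : a <= o <= b by lia.
  have := (proj1 (Hval v)) (ex_intro _ (nat_of_ord o) (conj Ho (eq_trans (pvE p o) Hov))).
  lia.
move=> Hv.
have [|k [Hk Hkv]] := (proj2 (Hval v)); first lia.
have Hkn : k < n by lia.
exists (Ordinal Hkn); split=> //=; try lia.
by rewrite -pvE.
Qed.

Lemma simple_contra n (p : 'S_n) a b : simple_perm p -> a < b -> b < n ->
  (0 < a \/ b.+1 < n) ->
  (forall k i1 i2, k < n -> a <= i1 <= b -> a <= i2 <= b -> ~~ (a <= k <= b) ->
     pv p i1 < pv p k -> pv p k < pv p i2 -> False) -> False.
Proof.
move=> Hs Hab Hbn Hnt Hc.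
have := Hs a b (convex_interval (ltnW Hab) Hbn Hc); lia.
Qed.

Lemma adj_false n (p : 'S_n) a : simple_perm p -> a.+1 < n -> 2 < n ->
  (pv p a.+1 = (pv p a).+1 \/ pv p a = (pv p a.+1).+1) -> False.
Proof.
move=> Hs Han Hn Hadj.
apply: (@simple_contra n p a a.+1 Hs) => //; first lia.
move=> k i1 i2 Hk Hi1 Hi2 Hkr.
have E1 : i1 = a \/ i1 = a.+1 by lia.
have E2 : i2 = a \/ i2 = a.+1 by lia.
by case: E1 => ->; case: E2 => ->; lia.
Qed.

Lemma pv_neq n (p : 'S_n) i j : i < n -> j < n -> i <> j -> pv p i <> pv p j.
Proof. by move=> Hi Hj Hne /(pv_inj Hi Hj). Qed.

Lemma P1 n (p : 'S_n) : simple_perm p -> avoids p [:: 4; 2; 3; 1] ->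
  avoids p [:: 3; 1; 2; 4] ->
  forall i j, i < j -> j < n -> (forall k, k <= j -> pv p k < pv p n.-1) ->
  pv p i < pv p j.
Proof.
move=> Hs A1 A2 i j Hij Hjn Hcol.
case: (ltngtP (pv p i) (pv p j)) => // [Hgt|Heq]; last first.
  by have := pv_inj (ltn_trans Hij Hjn) Hjn Heq; lia.
exfalso.
have [j0 [[i0 [Hi0 [Hj0n [Hcol0 Hv0]]]] Hmin]] :=
  @min_ex (fun j => exists i, i < j /\ j < n /\ (forall k, k <= j -> pv p k < pv p n.-1)
                       /\ pv p j < pv p i) (ex_intro _ j (ex_intro _ i (conj Hij (conj Hjn (conj Hcol Hgt))))).
set L := pv p n.-1 in Hcol0 *.
have He : j0 < n.-1.
  case: (ltngtP j0 n.-1) => // [Hc|Hc]; first lia.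
  by have := Hcol0 j0 (leqnn _); rewrite /L Hc ltnn.
have Hinc : forall a c, a < c -> c < j0 -> pv p a < pv p c.
  move=> a c Hac Hcj.
  case: (ltngtP (pv p a) (pv p c)) => // [Hlt|Heq]; last first.
    by have := pv_inj (ltn_trans Hac (ltn_trans Hcj Hj0n)) (ltn_trans Hcj Hj0n) Heq; lia.
  exfalso; apply: (Hmin c Hcj); exists a; split=> //; split; first lia.
  by split=> // k Hk; apply: Hcol0; lia.
set u := j0.-1.
have Hu : u.+1 = j0 by rewrite /u; lia.
have Hvu : pv p j0 < pv p u.
  case: (ltngtP i0 u) => [Hlt|Hgt'|Heq].
  - by apply: (ltn_trans Hv0); apply: Hinc; lia.
  - lia.
  - by rewrite -Heq.
have HuL : pv p u < L by apply: Hcol0; lia.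
have HA : forall k, j0 < k -> k < n -> pv p j0 < pv p k -> pv p k < pv p u -> False.
  move=> k Hk Hkn H1 H2.
  case: (ltngtP k n.-1) => [Hke|Hke|Hke]; last 1 first.
  - by move: H2; rewrite Hke -/L; lia.
  - by apply: (av3124 A2 (a:=u) (b:=j0) (c:=k) (d:=n.-1)) => //; lia.
  - lia.
case: (ltngtP (pv p u) (pv p j0).+1) => [Hc|Hc|Hc].
- lia.
-
  have Hun : u < n by lia.
  have Hwn : (pv p u).-1 < n by have := pv_lt p Hun; lia.
  have [k [Hkn Hkv]] := pv_onto p Hwn.
  have Hku : k < u.
    case: (ltngtP k u) => [//|Hku|Hku].
    + case: (ltngtP k j0) => [Hkj|Hkj|Hkj]; first lia.
      * by exfalso; apply: (HA k Hkj Hkn); lia.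
      * by move: Hkv; rewrite Hkj; lia.
    + by move: Hkv; rewrite Hku; lia.
  case: (ltngtP k u.-1) => [Hk1|Hk1|Hk1]; last first.
  + apply: (@adj_false n p k Hs) => //; try lia.
    left; have Hk1u : k.+1 = u by lia.
    rewrite Hk1u Hkv; lia.
  + lia.
  + have := Hinc k u.-1 Hk1 ltac:(lia); have := Hinc u.-1 u ltac:(lia) ltac:(lia); lia.
- apply: (@adj_false n p u Hs) => //; try lia.
  by right; rewrite Hu.
Qed.

Lemma first_top n (p : 'S_n) t : t < n -> pv p n.-1 <= pv p t ->
  exists t0, [/\ t0 <= t, pv p n.-1 <= pv p t0 & forall k, k < t0 -> pv p k < pv p n.-1].
Proof.
move=> Htn Ht.
have [t0 [Ht0 Hmin]] := @min_ex (fun t => pv p n.-1 <= pv p t) (ex_intro _ t Ht).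
exists t0; split=> //.
- by case: (leqP t0 t) => // Hlt; exfalso; apply: (Hmin t Hlt).
- by move=> k Hk; case: (leqP (pv p n.-1) (pv p k)) => // Hle; exfalso; apply: (Hmin k Hk).
Qed.

Lemma P2 n (p : 'S_n) : simple_perm p -> avoids p [:: 4; 2; 3; 1] ->
  avoids p [:: 3; 1; 2; 4] ->
  forall t i j, t < i -> i < j -> j < n -> pv p n.-1 <= pv p t ->
  pv p i < pv p n.-1 -> pv p j < pv p n.-1 -> pv p j < pv p i.
Proof.
move=> Hs A1 A2 t i j Hti Hij Hjn Ht Hi Hj.
set L := pv p n.-1 in Ht Hi Hj *.
case: (ltngtP (pv p j) (pv p i)) => // [Hlt|Heq]; last first.
  by have := pv_inj Hjn (ltn_trans Hij Hjn) Heq; lia.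
exfalso.
have [t0 [Ht0t Ht0 Hbef]] := first_top (ltn_trans Hti (ltn_trans Hij Hjn)) Ht.
have Ht0i : t0 < i by lia.
have [j0 [[i0 [Hti0 [Hij0 [Hj0n [Hi0 [Hj0 Hv0]]]]]] Hmin]] :=
  @min_ex (fun j => exists i, t0 < i /\ i < j /\ j < n /\ pv p i < L /\ pv p j < L
             /\ pv p i < pv p j)
   (ex_intro _ j (ex_intro _ i (conj Ht0i (conj Hij (conj Hjn (conj Hi (conj Hj Hlt))))))).
have Hn : 0 < n by lia.
have He : j0 < n.-1.
  case: (ltngtP j0 n.-1) => // [Hc|Hc]; first lia.
  by move: Hj0; rewrite Hc -/L ltnn.
have Ht0L : L < pv p t0.
  case: (ltngtP L (pv p t0)) Ht0 => // Heq _.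
  have := @pv_inj _ p n.-1 t0 ltac:(lia) ltac:(lia) Heq; lia.
have W1 : forall k, j0 < k -> k < n -> pv p i0 < pv p k.
  move=> k Hk Hkn; case: (ltngtP k n.-1) => [Hke|Hke|Hke]; last by rewrite Hke -/L; lia.
  - case: (ltngtP (pv p i0) (pv p k)) => // [Hc|Hc]; last first.
      by have := @pv_inj _ p i0 k ltac:(lia) Hkn Hc; lia.
    by exfalso; apply: (av4231 A1 (a:=t0) (b:=i0) (c:=j0) (d:=k)); lia.
  - lia.
have W2 : forall k, j0 < k -> k < n -> pv p k < pv p t0.
  move=> k Hk Hkn; case: (ltngtP k n.-1) => [Hke|Hke|Hke]; last by rewrite Hke -/L; lia.
  - case: (ltngtP (pv p k) (pv p t0)) => // [Hc|Hc]; last first.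
      by have := @pv_inj _ p k t0 Hkn ltac:(lia) Hc; lia.
    by exfalso; apply: (av3124 A2 (a:=t0) (b:=i0) (c:=j0) (d:=k)); lia.
  - lia.
apply: (@simple_contra n p j0 n.-1 Hs) => //; try lia.
move=> k i1 i2 Hkn Hi1 Hi2 Hkr H1 H2.
have Hkj : k < j0 by lia.
have F1 : pv p i0 < pv p i1.
  by case: (ltngtP i1 j0) => [|Hc|->] //; [lia | apply: W1; lia].
have F2 : pv p i2 < pv p t0.
  by case: (ltngtP i2 j0) => [|Hc|->] //; [lia | apply: W2; lia | lia].
case: (ltnP (pv p k) L) => HkL.
- case: (ltngtP k i0) => [Hc|Hc|Hc].
  + have Hi1e : i1 < n.-1.
      case: (ltngtP i1 n.-1) => // [Hc'|Hc']; first lia.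
      by move: H1; rewrite Hc' -/L; lia.
    by apply: (av3124 A2 (a:=k) (b:=i0) (c:=i1) (d:=n.-1)); rewrite -/L; lia.
  + by apply: (Hmin k Hkj); exists i0; do !split=> //; lia.
  + by move: H1; rewrite Hc; lia.
- have HkL' : L < pv p k.
    case: (ltngtP L (pv p k)) HkL => // Heq _.
    have := @pv_inj _ p n.-1 k ltac:(lia) Hkn Heq; lia.
  have Hkt : t0 < k.
    case: (ltngtP t0 k) => // [Hc|Hc]; first by have := Hbef k Hc; lia.
    by move: H2; rewrite -Hc; lia.
  have Hi2e : i2 < n.-1.
    case: (ltngtP i2 n.-1) => // [Hc'|Hc']; first lia.
    by move: H2; rewrite Hc' -/L; lia.
  by apply: (av4231 A1 (a:=t0) (b:=k) (c:=i2) (d:=n.-1)); rewrite -/L; lia.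
Qed.

Lemma P3 n (p : 'S_n) : simple_perm p -> avoids p [:: 4; 2; 3; 1] ->
  avoids p [:: 3; 1; 2; 4] ->
  forall i j b, i < j -> j < b -> b < n -> pv p n.-1 <= pv p i ->
  pv p n.-1 <= pv p j -> pv p b < pv p n.-1 -> pv p i < pv p j.
Proof.
move=> Hs A1 A2 i j b Hij Hjb Hbn Hi Hj Hb.
have HP2 := P2 Hs A1 A2.
set L := pv p n.-1 in Hi Hj Hb HP2 *.
case: (ltngtP (pv p i) (pv p j)) => // [Hgt|Heq]; last first.
  by have := @pv_inj _ p i j ltac:(lia) ltac:(lia) Heq; lia.
exfalso.
have [j0 [[i0 [b0 [Hij0 [Hjb0 [Hb0n [Hi0 [Hj0 [Hb0 Hv0]]]]]]]] Hmin]] :=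
  @min_ex (fun j => exists i b, i < j /\ j < b /\ b < n /\ L <= pv p i /\ L <= pv p j
             /\ pv p b < L /\ pv p j < pv p i)
   (ex_intro _ j (ex_intro _ i (ex_intro _ b (conj Hij (conj Hjb (conj Hbn (conj Hi (conj Hj (conj Hb Hgt))))))))).
have Hj0L : L < pv p j0.
  case: (ltngtP L (pv p j0)) Hj0 => // Heq _.
  have := @pv_inj _ p n.-1 j0 ltac:(lia) ltac:(lia) Heq; lia.
have X1 : forall a c, a < c -> c < j0 -> L <= pv p a -> L <= pv p c -> pv p a < pv p c.
  move=> a c Hac Hcj Ha Hc.
  case: (ltngtP (pv p a) (pv p c)) => // [Hlt|Heq]; last first.
    by have := @pv_inj _ p a c ltac:(lia) ltac:(lia) Heq; lia.
  exfalso; apply: (Hmin c Hcj); exists a, b0; do !split=> //; lia.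
have Hj01 : 0 <= j0.-1 by [].
have [m [Hm Hmax]] := range_max (pv p) Hj01.
have Hmj : m < j0 by lia.
have Hmv : pv p j0 < pv p m by have := Hmax i0 ltac:(lia); lia.
have X2 : forall k, j0 < k -> k < n.-1 -> pv p j0 < pv p k -> pv p k < pv p m -> False.
  move=> k Hk Hke H1 H2.
  by apply: (av4231 A1 (a:=m) (b:=j0) (c:=k) (d:=n.-1)); rewrite -/L; lia.
have Hwn : (pv p j0).+1 < n by have := pv_lt p (i:=m) ltac:(lia); lia.
have [k1 [Hk1n Hk1v]] := pv_onto p Hwn.
have Hk1 : k1 < j0.
  case: (ltngtP k1 j0) => // [Hc|Hc]; last by move: Hk1v; rewrite Hc; lia.
  exfalso.
  case: (ltngtP (pv p k1) (pv p m)) => [Hc'|Hc'|Hc'].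
  - case: (ltngtP k1 n.-1) => [Hc''|Hc''|Hc'']; first by apply: (X2 k1) => //; lia.
    + lia.
    + by move: Hk1v; rewrite Hc'' -/L; lia.
  - by have := Hmax k1; lia.
  - by have := @pv_inj _ p k1 m ltac:(lia) ltac:(lia) Hc'; lia.
have Hin : forall c, k1 < c -> c < j0 -> pv p k1 < pv p c.
  move=> c Hc1 Hc2.
  case: (ltnP (pv p c) L) => HcL; last by apply: X1 => //; lia.
  exfalso.
  have Hbc : pv p b0 < pv p c by apply: (HP2 k1 c b0) => //; lia.
  by apply: (av4231 A1 (a:=k1) (b:=c) (c:=j0) (d:=b0)); lia.
apply: (@simple_contra n p k1 j0 Hs) => //; try lia.
move=> k i1 i2 Hkn Hi1 Hi2 Hkr H1 H2.
have F1 : pv p j0 <= pv p i1.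
  case: (ltngtP i1 j0) => [Hc|Hc|->] //; last lia.
  case: (ltngtP i1 k1) => [Hc'|Hc'|->]; [lia | | lia].
  by have := Hin i1 Hc' Hc; lia.
have F2 : pv p i2 <= pv p m.
  case: (ltngtP i2 j0) => [Hc|Hc|->]; [ | lia | lia].
  by apply: Hmax; lia.
have Hk2 : (pv p j0).+1 < pv p k.
  case: (ltngtP (pv p j0).+1 (pv p k)) => [//|Hc|Hc]; first lia.
  by have := @pv_inj _ p k1 k ltac:(lia) Hkn (etrans Hk1v Hc); lia.
case: (ltnP k k1) => Hkk.
- have := X1 k k1 Hkk Hk1; lia.
- have Hkj : j0 < k by lia.
  case: (ltngtP k n.-1) => [Hc|Hc|Hc]; first by apply: (X2 k) => //; lia.
  + lia.
  + by move: Hk2; rewrite Hc -/L; lia.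
Qed.

Lemma P4 n (p : 'S_n) : simple_perm p -> avoids p [:: 4; 2; 3; 1] ->
  avoids p [:: 3; 1; 2; 4] ->
  forall i j, i < j -> j < n -> (forall k, i <= k -> k < n -> pv p n.-1 <= pv p k) ->
  pv p j < pv p i.
Proof.
move=> Hs A1 A2 i j Hij Hjn Hcol.
set L := pv p n.-1 in Hcol *.
case: (ltngtP (pv p j) (pv p i)) => // [Hlt|Heq]; last first.
  by have := @pv_inj _ p j i ltac:(lia) ltac:(lia) Heq; lia.
exfalso.
have [s [Hs3 Hsmin]] := @min_ex (fun s => forall k, s <= k -> k < n -> L <= pv p k)
   (ex_intro _ i Hcol).
have Hsi : s <= i.
  by case: (leqP s i) => // Hc; exfalso; apply: (Hsmin i Hc).
have Hbb : 0 < s -> pv p s.-1 < L.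
  move=> Hs0; case: (ltnP (pv p s.-1) L) => // Hc; exfalso.
  apply: (Hsmin s.-1); first lia.
  move=> k Hk Hkn; case: (ltngtP k s.-1) => [Hc'|Hc'|->] //; first lia.
  by apply: Hs3; lia.
have [J [[a0 [Ha0 [Ha0J [HJn Hv0]]]] HJmax]] :=
  @max_ex (fun j => exists a, s <= a /\ a < j /\ j < n /\ pv p a < pv p j) n
   (ex_intro _ j (ex_intro _ i (conj Hsi (conj Hij (conj Hjn Hlt)))))
   (fun j H => let: ex_intro a (conj _ (conj _ (conj H _))) := H in ltnW H).
have Y1 : forall y z, J < y -> y < n -> s <= z <= J -> pv p y < pv p z.
  move=> y z Hy Hyn Hz.
  case: (ltngtP (pv p y) (pv p z)) => // [Hc|Hc]; last first.
    by have := @pv_inj _ p y z Hyn ltac:(lia) Hc; lia.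
  have Hz1 : s <= z by lia.
  have Hz2 : z < y by lia.
  have := HJmax y (ex_intro _ z (conj Hz1 (conj Hz2 (conj Hyn Hc)))); lia.
have Ha0L : L <= pv p a0 by apply: Hs3; lia.
have HJe : J < n.-1.
  case: (ltngtP J n.-1) => // [Hc|Hc]; first lia.
  by move: Hv0; rewrite Hc -/L; lia.
have Ha0L' : L < pv p a0.
  case: (ltngtP L (pv p a0)) Ha0L => // Heq _.
  have := @pv_inj _ p n.-1 a0 ltac:(lia) ltac:(lia) Heq; lia.
apply: (@simple_contra n p s J Hs) => //; try lia.
move=> k i1 i2 Hkn Hi1 Hi2 Hkr H1 H2.
case: (ltnP J k) => HJk.
  by have := Y1 k i1 HJk Hkn Hi1; lia.
have Hks : k < s by lia.
have Hs0 : 0 < s by lia.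
have HbbL := Hbb Hs0.
have Hi1L : L <= pv p i1 by apply: Hs3; lia.
have Hkb : k < s.-1.
  case: (ltngtP k s.-1) => [//|Hc|Hc]; first lia.
  by move: H1; rewrite Hc; lia.
case: (ltngtP (pv p k) (pv p a0)) => [Hc|Hc|Hc].
-
  have Hi1J : i1 < J.
    case: (ltngtP i1 J) => [//|Hc'|Hc']; first lia.
    by move: H1; rewrite Hc'; lia.
  by apply: (av3124 A2 (a:=k) (b:=s.-1) (c:=i1) (d:=J)); lia.
- case: (ltngtP (pv p k) (pv p J)) => [Hc'|Hc'|Hc'].
  + by apply: (av3124 A2 (a:=k) (b:=s.-1) (c:=a0) (d:=J)); lia.
  + case: (ltngtP a0 i2) => [Hc''|Hc''|Hc''].
    * by apply: (av3124 A2 (a:=k) (b:=s.-1) (c:=a0) (d:=i2)); lia.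
    * by apply: (av4231 A1 (a:=i2) (b:=a0) (c:=J) (d:=n.-1)); rewrite -/L; lia.
    * by move: H2; rewrite -Hc''; lia.
  + by have := @pv_inj _ p k J Hkn ltac:(lia) Hc'; lia.
- by have := @pv_inj _ p k a0 Hkn ltac:(lia) Hc; lia.
Qed.


Definition Lv n (p : 'S_n) := pv p n.-1.
Definition c1 n (p : 'S_n) i := all (fun k => pv p k < Lv p) (iota 0 i.+1).
Definition c3 n (p : 'S_n) i := all (fun k => Lv p <= pv p k) (iota i (n - i)).
Definition M1 n (p : 'S_n) i :=
  \max_(k < n | ~~ c1 p k && (pv p k < Lv p) && (pv p i < pv p k)) k.+1.
Definition M3 n (p : 'S_n) i :=
  \max_(k < n | ~~ c3 p k && (Lv p <= pv p k) && (pv p k < pv p i)) k.+1.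
Definition K n (p : 'S_n) i :=
  if c1 p i then M1 p i * n.+2 + (n - pv p i)
  else if c3 p i then M3 p i * n.+2 + (pv p i).+1
  else i.+1 * n.+2.

Lemma c1P n (p : 'S_n) i : c1 p i -> forall k, k <= i -> pv p k < Lv p.
Proof. by move=> /allP H k Hk; apply: H; rewrite mem_iota; lia. Qed.

Lemma notc1 n (p : 'S_n) i : ~~ c1 p i -> exists k, k <= i /\ Lv p <= pv p k.
Proof.
move=> /allPn [k]; rewrite mem_iota => Hk Hv.
by exists k; split; lia.
Qed.

Lemma c3P n (p : 'S_n) i : c3 p i -> forall k, i <= k -> k < n -> Lv p <= pv p k.
Proof. by move=> /allP H k Hk Hkn; apply: H; rewrite mem_iota; lia. Qed.

Lemma notc3 n (p : 'S_n) i : i < n -> ~~ c3 p i -> exists k, i <= k < n /\ pv p k < Lv p.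
Proof.
move=> Hi /allPn [k]; rewrite mem_iota => Hk Hv.
by exists k; split; lia.
Qed.

Lemma c1_bot n (p : 'S_n) i : c1 p i -> pv p i < Lv p.
Proof. by move=> H; apply: (c1P H). Qed.

Lemma c3_top n (p : 'S_n) i : i < n -> c3 p i -> Lv p <= pv p i.
Proof. by move=> Hi H; apply: (c3P H). Qed.


Lemma top2_order n (p : 'S_n) (Hs : simple_perm p) (A1 : avoids p [:: 4; 2; 3; 1])
  (A2 : avoids p [:: 3; 1; 2; 4]) u v : u < n -> v < n -> ~~ c3 p u -> ~~ c3 p v ->
  Lv p <= pv p u -> Lv p <= pv p v -> pv p u < pv p v -> u < v.
Proof.
move=> Hu Hv Cu Cv Tu Tv Huv.
case: (ltngtP u v) => [//|Hc|Hc]; last by move: Huv; rewrite Hc ltnn.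
have [b [Hb HbL]] := notc3 Hu Cu.
have Hbu : u < b by case: (ltngtP u b) => // [Hc'|Hc']; [lia | move: HbL; rewrite -Hc'; lia].
have := P3 Hs A1 A2 (i:=v) (j:=u) (b:=b) Hc Hbu ltac:(lia) Tv Tu HbL; lia.
Qed.

Lemma bot2_order n (p : 'S_n) (Hs : simple_perm p) (A1 : avoids p [:: 4; 2; 3; 1])
  (A2 : avoids p [:: 3; 1; 2; 4]) u v : u < n -> v < n -> ~~ c1 p u -> ~~ c1 p v ->
  pv p u < Lv p -> pv p v < Lv p -> pv p u < pv p v -> v < u.
Proof.
move=> Hu Hv Cu Cv Bu Bv Huv.
case: (ltngtP u v) => [Hc|//|Hc]; last by move: Huv; rewrite Hc ltnn.
have [t [Ht HtL]] := notc1 Cu.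
have Htu : t < u by case: (ltngtP t u) => // [Hc'|Hc']; [lia | move: HtL; rewrite Hc'; lia].
have := P2 Hs A1 A2 (t:=t) (i:=u) (j:=v) Htu Hc Hv HtL Bu Bv; lia.
Qed.



Lemma lex_lt a b c d N : a < c -> b < N -> a * N + b < c * N + d.
Proof.
move=> Hac HbN.
have : a.+1 * N <= c * N by rewrite leq_mul2r Hac orbT.
rewrite mulSn; lia.
Qed.

Lemma lex_le a b c d N : a <= c -> b < d -> a * N + b < c * N + d.
Proof.
move=> Hac Hbd.
have : a * N <= c * N by rewrite leq_mul2r Hac orbT.
lia.
Qed.

Lemma lex_lt0 a b c N : a < c -> b < N -> a * N + b < c * N.
Proof. by move=> H1 H2; have := @lex_lt a b c 0 N H1 H2; rewrite addn0. Qed.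

Lemma lex_le0 a c d N : a <= c -> 0 < d -> a * N < c * N + d.
Proof. by move=> H1 H2; have := @lex_le a 0 c d N H1 H2; rewrite addn0. Qed.

Lemma Kb n (p : 'S_n) (Hs : simple_perm p) (A1 : avoids p [:: 4; 2; 3; 1])
  (A2 : avoids p [:: 3; 1; 2; 4]) u v : u < n -> v < n ->
  Lv p <= pv p u -> Lv p <= pv p v -> pv p u < pv p v -> K p u < K p v.
Proof.
move=> Hu Hv Tu Tv Huv.
have Nu : c1 p u = false by apply/negbTE/negP => /c1_bot; lia.
have Nv : c1 p v = false by apply/negbTE/negP => /c1_bot; lia.
have Hpu := pv_lt p Hu; have Hpv := pv_lt p Hv.
rewrite /K Nu Nv.
case Cu: (c3 p u); case Cv: (c3 p v).
- apply: lex_le; last lia.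
  apply/bigmax_leqP => k /andP [/andP [Ck Tk] Hk].
  by apply: (leq_bigmax_cond (F := fun k : 'I_n => k.+1)); rewrite Ck Tk /=; lia.
-
  have Hm : M3 p u <= v.
    apply/bigmax_leqP => k /andP [/andP [Ck Tk] Hk].
    by apply: (top2_order Hs A1 A2) => //; rewrite ?Cv //; lia.
  apply: lex_lt0; lia.
-
  have Hm : u.+1 <= M3 p v.
    by apply: (leq_bigmax_cond (F := fun k : 'I_n => k.+1) (Ordinal Hu)); rewrite /= Cu Tu Huv.
  apply: lex_le0; lia.
- have : u < v by apply: (top2_order Hs A1 A2) => //; rewrite ?Cu ?Cv.
  move=> Huv'; have := @lex_lt0 u.+1 0 v.+1 n.+2 ltac:(lia) ltac:(lia).
  by rewrite addn0.
Qed.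

Lemma Kc n (p : 'S_n) (Hs : simple_perm p) (A1 : avoids p [:: 4; 2; 3; 1])
  (A2 : avoids p [:: 3; 1; 2; 4]) u v : u < n -> v < n ->
  pv p u < Lv p -> pv p v < Lv p -> pv p u < pv p v -> K p v < K p u.
Proof.
move=> Hu Hv Bu Bv Huv.
have Nu : c3 p u = false by apply/negbTE/negP => /(c3_top Hu); lia.
have Nv : c3 p v = false by apply/negbTE/negP => /(c3_top Hv); lia.
have Hpu := pv_lt p Hu; have Hpv := pv_lt p Hv.
rewrite /K Nu Nv.
case Cu: (c1 p u); case Cv: (c1 p v).
- apply: lex_le; last lia.
  apply/bigmax_leqP => k /andP [/andP [Ck Bk] Hk].
  by apply: (leq_bigmax_cond (F := fun k : 'I_n => k.+1)); rewrite Ck Bk /=; lia.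
-
  have Hm : v.+1 <= M1 p u.
    by apply: (leq_bigmax_cond (F := fun k : 'I_n => k.+1) (Ordinal Hv)); rewrite /= Cv Bv Huv.
  apply: lex_le0; lia.
-
  have Hm : M1 p v <= u.
    apply/bigmax_leqP => k /andP [/andP [Ck Bk] Hk].
    by apply: (bot2_order Hs A1 A2) => //; rewrite ?Cu //; lia.
  apply: lex_lt0; lia.
- have : v < u by apply: (bot2_order Hs A1 A2) => //; rewrite ?Cu ?Cv.
  move=> Hvu; have := @lex_lt0 v.+1 0 u.+1 n.+2 ltac:(lia) ltac:(lia).
  by rewrite addn0.
Qed.

Lemma K_bound n (p : 'S_n) i : i < n -> K p i < n.+2 * n.+2 - 1.
Proof.
move=> Hi.
have Hm1 : M1 p i <= n.
  by apply/bigmax_leqP => k _; apply: ltn_ord.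
have Hm3 : M3 p i <= n.
  by apply/bigmax_leqP => k _; apply: ltn_ord.
have Hp := pv_lt p Hi.
rewrite /K; case: (c1 p i); last case: (c3 p i).
- have : M1 p i * n.+2 <= n * n.+2 by rewrite leq_mul2r Hm1 orbT.
  lia.
- have : M3 p i * n.+2 <= n * n.+2 by rewrite leq_mul2r Hm3 orbT.
  lia.
- have : i.+1 * n.+2 <= n * n.+2 by rewrite leq_mul2r Hi orbT.
  lia.
Qed.

Definition D n (p : 'S_n) i : R := Rmult (INR (K p i).+1) (Rinv (INR (n.+2 * n.+2))).

Lemma D_pos_inv n : Rlt 0 (Rinv (INR (n.+2 * n.+2))).
Proof. apply: Rinv_0_lt_compat; apply: lt_0_INR; apply/ltP; lia. Qed.

Lemma D_bounds n (p : 'S_n) i : i < n -> Rlt 0 (D p i) /\ Rlt (D p i) R1.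
Proof.
move=> Hi; have Hb := K_bound p Hi; have Hc := D_pos_inv n.
split.
  rewrite /D; apply: Rmult_lt_0_compat => //; apply: lt_0_INR; apply/ltP; lia.
have Hlt : Rlt (INR (K p i).+1) (INR (n.+2 * n.+2)) by apply: lt_INR; apply/ltP; lia.
have H1 : Rmult (INR (n.+2 * n.+2)) (Rinv (INR (n.+2 * n.+2))) = R1.
  by apply: Rinv_r; apply: not_0_INR; lia.
rewrite /D -H1; exact: Rmult_lt_compat_r.
Qed.

Lemma D_mono n (p : 'S_n) u v : K p u < K p v -> Rlt (D p u) (D p v).
Proof.
move=> H; rewrite /D; apply: Rmult_lt_compat_r; first exact: D_pos_inv.
by apply: lt_INR; apply/ltP; lia.
Qed.

Lemma c1_mono n (p : 'S_n) i j : c1 p j -> i <= j -> c1 p i.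
Proof.
move=> Hj Hij; apply/allP => k; rewrite mem_iota => Hk.
by apply: (c1P Hj); lia.
Qed.

Lemma c3_mono n (p : 'S_n) i j : c3 p i -> i <= j -> c3 p j.
Proof.
move=> Hi Hij; apply/allP => k; rewrite mem_iota => Hk.
by apply: (c3P Hi); lia.
Qed.

Definition xr n (p : 'S_n) (o : 'I_n) : R :=
  if c1 p o then Rminus 1 (D p o) else if c3 p o then Rminus 3 (D p o) else Rplus 1 (D p o).
Definition yr n (p : 'S_n) (o : 'I_n) : R :=
  if pv p o < Lv p then Rminus 1 (D p o) else Rplus 1 (D p o).

Lemma geom_of n (p : 'S_n) (Hs : simple_perm p) (A1 : avoids p [:: 4; 2; 3; 1])
  (A2 : avoids p [:: 3; 1; 2; 4]) : in_Geom figF p.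
Proof.
exists (xr p), (yr p); split; [|split].
- move=> o; have [H0 H1] := D_bounds p (ltn_ord o).
  rewrite /xr /yr /figF.
  case C1: (c1 p o).
    by rewrite (c1_bot C1); left; lra.
  case C3: (c3 p o).
    have Ht := c3_top (ltn_ord o) C3.
    have -> : (pv p o < Lv p) = false by apply/negbTE; rewrite -leqNgt.
    by right; right; right; lra.
  case: (ltnP (pv p o) (Lv p)) => _.
    by right; right; left; lra.
  by right; left; lra.
- move=> i j Hij.
  have [Hi0 Hi1] := D_bounds p (ltn_ord i).
  have [Hj0 Hj1] := D_bounds p (ltn_ord j).
  rewrite /xr.
  case C1j: (c1 p j).
    have C1i : c1 p i by apply: (c1_mono C1j); lia.
    rewrite C1i.
    have Hv : pv p i < pv p j.
      exact: (P1 Hs A1 A2 Hij (ltn_ord j) (c1P C1j)).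
    have := Kc Hs A1 A2 (ltn_ord i) (ltn_ord j) (c1_bot C1i) (c1_bot C1j) Hv.
    move/(D_mono (p:=p)); lra.
  case C1i: (c1 p i).
    by case: (c3 p j); lra.
  case C3i: (c3 p i).
    have C3j : c3 p j by apply: (c3_mono C3i); lia.
    rewrite C3j.
    have Hv : pv p j < pv p i.
      exact: (P4 Hs A1 A2 Hij (ltn_ord j) (c3P C3i)).
    have := Kb Hs A1 A2 (ltn_ord j) (ltn_ord i) (c3_top (ltn_ord j) C3j) (c3_top (ltn_ord i) C3i) Hv.
    move/(D_mono (p:=p)); lra.
  case C3j: (c3 p j); first lra.
  have : K p i < K p j.
    rewrite /K C1i C1j C3i C3j.
    by have := @lex_lt0 (nat_of_ord i).+1 0 (nat_of_ord j).+1 n.+2 ltac:(lia) ltac:(lia); rewrite addn0.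
  move/(D_mono (p:=p)); lra.
- move=> i j.
  have [Hi0 Hi1] := D_bounds p (ltn_ord i).
  have [Hj0 Hj1] := D_bounds p (ltn_ord j).
  rewrite /yr -!pvE.
  case: (ltngtP (pv p i) (pv p j)) => [Hlt|Hgt|Heq].
  + split=> // _.
    case Bi: (pv p i < Lv p); case Bj: (pv p j < Lv p).
    * have := Kc Hs A1 A2 (ltn_ord i) (ltn_ord j) Bi Bj Hlt.
      move/(D_mono (p:=p)); lra.
    * lra.
    * lia.
    * have := Kb Hs A1 A2 (ltn_ord i) (ltn_ord j) ltac:(lia) ltac:(lia) Hlt.
      move/(D_mono (p:=p)); lra.
  + split=> // H; exfalso; move: H.
    case Bi: (pv p i < Lv p); case Bj: (pv p j < Lv p).
    * have := Kc Hs A1 A2 (ltn_ord j) (ltn_ord i) Bj Bi Hgt.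
      move/(D_mono (p:=p)); lra.
    * lia.
    * lra.
    * have := Kb Hs A1 A2 (ltn_ord j) (ltn_ord i) ltac:(lia) ltac:(lia) Hgt.
      move/(D_mono (p:=p)); lra.
  + have -> : i = j by apply: val_inj; apply: (pv_inj (ltn_ord i) (ltn_ord j) Heq).
    by split=> H; [lra | lia].
Qed.


Local Open Scope R_scope.
Lemma figF_inv x y : figF x y ->
  (0 <= x /\ x <= 1 /\ y = x) \/ (1 <= x /\ x <= 2 /\ y = x) \/
  (1 <= x /\ x <= 2 /\ y = 2 - x) \/ (2 <= x /\ x <= 3 /\ y = 4 - x).
Proof. rewrite /figF; intuition. Qed.

Lemma geom_4231 {a b c d xa xb xc xd : R} :
  figF xa a -> figF xb b -> figF xc c -> figF xd d ->
  (xa < xb) -> (xb < xc) -> (xc < xd) ->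
  (b < c) -> (d < b) -> (c < a) -> False.
Proof.
move=> /figF_inv Ha /figF_inv Hb /figF_inv Hc /figF_inv Hd *.
case: Ha => [|[|[|]]] Ha; case: Hb => [|[|[|]]] Hb;
case: Hc => [|[|[|]]] Hc; case: Hd => [|[|[|]]] Hd; lra.
Qed.

Lemma geom_3124 {a b c d xa xb xc xd : R} :
  figF xa a -> figF xb b -> figF xc c -> figF xd d ->
  (xa < xb) -> (xb < xc) -> (xc < xd) ->
  (b < c) -> (c < a) -> (a < d) -> False.
Proof.
move=> /figF_inv Ha /figF_inv Hb /figF_inv Hc /figF_inv Hd *.
case: Ha => [|[|[|]]] Ha; case: Hb => [|[|[|]]] Hb;
case: Hc => [|[|[|]]] Hc; case: Hd => [|[|[|]]] Hd; lra.
Qed.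
Local Close Scope R_scope.

Lemma geom_avoids (n : nat) (p : 'S_n) : in_Geom figF p ->
  avoids p [:: 4; 2; 3; 1] /\ avoids p [:: 3; 1; 2; 4].
Proof.
case=> x [y [HF [Hx Hy]]].
pose o0 : 'I_4 := @Ordinal 4 0 isT. pose o1 : 'I_4 := @Ordinal 4 1 isT.
pose o2 : 'I_4 := @Ordinal 4 2 isT. pose o3 : 'I_4 := @Ordinal 4 3 isT.
split=> -[f [Hf1 Hf2]].
- have Y : forall i j : 'I_4, nth 0 [:: 4; 2; 3; 1] i < nth 0 [:: 4; 2; 3; 1] j ->
     Rlt (y (f i)) (y (f j)).
    by move=> i j H; apply/Hy; rewrite -Hf2.
  have X : forall i j : 'I_4, i < j -> Rlt (x (f i)) (x (f j)).
    by move=> i j H; apply: Hx; apply: Hf1.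
  exact: (geom_4231 (HF (f o0)) (HF (f o1)) (HF (f o2)) (HF (f o3))
    (X o0 o1 isT) (X o1 o2 isT) (X o2 o3 isT) (Y o1 o2 isT) (Y o3 o1 isT) (Y o2 o0 isT)).
- have Y : forall i j : 'I_4, nth 0 [:: 3; 1; 2; 4] i < nth 0 [:: 3; 1; 2; 4] j ->
     Rlt (y (f i)) (y (f j)).
    by move=> i j H; apply/Hy; rewrite -Hf2.
  have X : forall i j : 'I_4, i < j -> Rlt (x (f i)) (x (f j)).
    by move=> i j H; apply: Hx; apply: Hf1.
  exact: (geom_3124 (HF (f o0)) (HF (f o1)) (HF (f o2)) (HF (f o3))
    (X o0 o1 isT) (X o1 o2 isT) (X o2 o3 isT) (Y o1 o2 isT) (Y o2 o0 isT) (Y o0 o3 isT)).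
Qed.


Theorem proposition5p1 (n : nat) (p : 'S_n) :
  (simple_perm p /\ avoids p [:: 4; 2; 3; 1] /\ avoids p [:: 3; 1; 2; 4]) <->
  (simple_perm p /\ in_Geom figF p).
Proof.
split.
- by case=> Hs [A1 A2]; split=> //; apply: geom_of.
- by case=> Hs HG; split=> //; apply: geom_avoids.
Qed.
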